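(* Let $X$ be a commutative topological algebra over $\mathbb{K}$, let $M\subset X$, and let $\alpha\ge\aleph_0$ be a cardinal with $\alpha\ge w(X)$. Then $M$ is $\alpha$-infinitely strongly $\alpha$-dense-algebrable if and only if $M$ is strongly $\alpha$-dense-algebrable.
   Context: Algebras are associative linear algebras over $\mathbb{K}$; a topological algebra has continuous sum, product and scalar multiplication. $w(X)$ is the smallest cardinality of a base of the topology. $\langle S\rangle$ is the subalgebra generated by $S$. With $\mathbb{P}_n$ the polynomials in $n$ variables without constant term, $S$ is a set of free generators (SFG) if $P(x_1,\dots,x_n)\neq 0$ for every $n$, every non-zero $P\in\mathbb{P}_n$ and all pairwise distinct $x_1,\dots,x_n\in S$. An $\alpha$-generated free subalgebra is a subalgebra $\langle F\rangle$ with $F$ an SFG of cardinality $\alpha$. $M$ is strongly $\alpha$-dense-algebrable if $M\cup\{0\}$ contains a dense $\alpha$-generated free subalgebra of $X$. For $\alpha\ge\aleph_0$, $M$ is $\alpha$-infinitely strongly $\alpha$-dense-algebrable if there is a family $\{Y_\kappa\}_{\kappa<\alpha}$ of dense $\alpha$-generated free subalgebras of $X$ with $Y_\kappa\subset M\cup\{0\}$ for all $\kappa$ and $Y_{\kappa_1}\cap Y_{\kappa_2}=\{0\}$ for $\kappa_1\ne\kappa_2$. *)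

(* Defs.v *)
From HB Require Import structures.
From mathcomp Require Import all_boot all_order all_algebra.
From mathcomp Require Import mpoly.
From mathcomp Require Import all_classical all_reals all_analysis.
From mathcomp Require complex.
Import complex.ComplexField.

Set Implicit Arguments.
Unset Strict Implicit.
Unset Printing Implicit Defensive.

Import Order.TTheory GRing.Theory Num.Theory.
Import numFieldNormedType.Exports.
Local Open Scope classical_set_scope.
Local Open Scope ring_scope.
Local Open Scope card_scope.

Definition Kfield (R : realType) (b : bool) : numFieldType :=
  if b then (R : numFieldType) else (complex.complex R : numFieldType).


Section Defs.
Variables (K : numFieldType) (X : topologicalLmodType K) (mul : X -> X -> X).

(* Continuity of +, of
   scalar multiplication K * X -> X (and of opposite) is part of
   [topologicalLmodType]. *)
Definition comm_top_algebra : Prop :=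
  [/\ (forall x y z, mul x (mul y z) = mul (mul x y) z),
      (forall x y, mul x y = mul y x),
      (forall a x y z, mul (a *: x + y) z = a *: mul x z + mul y z) &
      continuous (fun p : X * X => mul p.1 p.2)].

Definition subalg_closed (A : set X) : Prop :=
  [/\ A 0,
      (forall x y, A x -> A y -> A (x + y)),
      (forall (a : K) x, A x -> A (a *: x)) &
      (forall x y, A x -> A y -> A (mul x y))].

Definition gen_subalg (S : set X) : set X :=
  [set x | forall A, S `<=` A -> subalg_closed A -> A x].

Definition prod_list (s : seq X) : X :=
  if s is a :: s' then foldl mul a s' else 0.

Definition mono_eval n (m : 'X_{1..n}) (x : 'I_n -> X) : X :=
  prod_list (flatten [seq nseq (m i) (x i) | i <- enum 'I_n]).

(* P(x_1,...,x_n) for P without constant term *)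
Definition peval n (P : {mpoly K[n]}) (x : 'I_n -> X) : X :=
  \sum_(m <- msupp P) P@_m *: mono_eval m x.

Definition no_const_term n (P : {mpoly K[n]}) : Prop :=
  P@_0%MM = 0.

Definition SFG (S : set X) : Prop :=
  forall n (P : {mpoly K[n]}) (x : 'I_n -> X),
    no_const_term P -> P != 0 -> injective x -> (forall i, S (x i)) ->
    peval P x != 0.

Definition free_subalg_gen (A : Type) (Y : set X) : Prop :=
  exists F : set X, [/\ SFG F, F #= [set: A] & Y = gen_subalg F].

(* w(X) <= alpha = |A| : X has a base of cardinality at most |A| *)
Definition weight_le (A : Type) : Prop :=
  exists2 B : set (set X), basis B & B #<= [set: A].

Definition strongly_dense_algebrable (A : Type) (M : set X) : Prop :=
  exists Y : set X,
    [/\ free_subalg_gen A Y, dense Y & Y `<=` M `|` [set 0]].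

Definition inf_strongly_dense_algebrable (A : Type) (M : set X) : Prop :=
  exists Y : A -> set X,
    [/\ (forall k, free_subalg_gen A (Y k)),
        (forall k, dense (Y k)),
        (forall k, Y k `<=` M `|` [set 0]) &
        (forall k1 k2, k1 <> k2 -> Y k1 `&` Y k2 = [set 0])].

End Defs.

(* Main.v *)
From HB Require Import structures.
From mathcomp Require Import all_boot all_order all_algebra ssrAC.
From mathcomp Require Import mpoly.
From mathcomp Require Import all_classical all_reals all_analysis.
Require Import Defs.
Set Implicit Arguments.
Unset Strict Implicit.
Unset Printing Implicit Defensive.
Import Order.TTheory GRing.Theory Num.Theory.
Import numFieldNormedType.Exports.
Local Open Scope classical_set_scope.
Local Open Scope ring_scope.

Section Unit.
Variables (K : numFieldType) (X : topologicalLmodType K) (mul : X -> X -> X).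
Hypothesis HA : comm_top_algebra mul.

Lemma amulA x y z : mul x (mul y z) = mul (mul x y) z.
Proof. by have [h _ _ _] := HA; apply: h. Qed.
Lemma amulC x y : mul x y = mul y x.
Proof. by have [_ h _ _] := HA; apply: h. Qed.
Lemma amulDZl a x y z : mul (a *: x + y) z = a *: mul x z + mul y z.
Proof. by have [_ _ h _] := HA; apply: h. Qed.
Lemma amulDl x y z : mul (x + y) z = mul x z + mul y z.
Proof. have := amulDZl 1 x y z. rewrite !scale1r. done. Qed.
Lemma amul0l z : mul 0 z = 0.
Proof. by apply: (@addrI _ (mul 0 z)); rewrite -amulDl !addr0. Qed.
Lemma amulZl a x z : mul (a *: x) z = a *: mul x z.
Proof. by rewrite -[a *: x]addr0 amulDZl amul0l addr0. Qed.
Lemma amul0r z : mul z 0 = 0.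
Proof. by rewrite amulC amul0l. Qed.
Lemma amulDr x y z : mul z (x + y) = mul z x + mul z y.
Proof. by rewrite amulC amulDl !(amulC z). Qed.
Lemma amulZr a x z : mul z (a *: x) = a *: mul z x.
Proof. by rewrite amulC amulZl amulC. Qed.

Definition U := (K * X)%type.
HB.instance Definition _ := GRing.Zmodule.on U.

Definition umul (u v : U) : U := (u.1 * v.1, u.1 *: v.2 + v.1 *: u.2 + mul u.2 v.2).
Definition uone : U := (1, 0).

Lemma umulA : associative umul.
Proof.
move=> [a x] [b y] [c z]; rewrite /umul /=; congr pair; first by rewrite mulrA.
rewrite !scalerDr !scalerA !amulDl !amulDr !amulZl !amulZr amulA.
rewrite (mulrC c a) (mulrC c b).
by rewrite (AC (4*3) (1*2*3*4*5*6*7)) (AC ((1*3)*3) (1*2*5*3*6*4*7)).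
Qed.

Lemma umulC : commutative umul.
Proof.
move=> [a x] [b y]; rewrite /umul /=; congr pair; first by rewrite mulrC.
by rewrite (amulC x y) (addrC (a *: y)).  
Qed.

Lemma umul1 : left_id uone umul.
Proof. by move=> [a x]; rewrite /umul /= mul1r scaler0 scale1r amul0l !addr0 ?add0r. Qed.

Lemma umulDl : left_distributive umul +%R.
Proof.
move=> [a x] [b y] [c z]; rewrite /umul /=; congr pair; first by rewrite mulrDl.
rewrite scalerDl scalerDr amulDl.
by rewrite /= (AC ((2*2)*2) (1*3*5*2*4*6)) (AC (3*3) (1*2*3*4*5*6)). 
Qed.

Lemma uone_neq0 : uone != 0.
Proof. by apply/negP => /eqP [] /eqP; rewrite oner_eq0. Qed.

HB.instance Definition _ := GRing.Zmodule_isComNzRing.Build U umulA umulC umul1 umulDl uone_neq0.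

Definition emb (c : K) : U := (c, 0).
Definition iota (x : X) : U := (0, x).

Lemma emb_is_zmod : zmod_morphism emb.
Proof. by move=> a b; rewrite /emb; congr pair; rewrite subrr. Qed.
HB.instance Definition _ := GRing.isZmodMorphism.Build K U emb emb_is_zmod.
Lemma emb_is_monoid : monoid_morphism emb.
Proof.
split=> // a b; rewrite /emb /GRing.mul /= /umul /=; congr pair.
by rewrite !scaler0 amul0l !addr0.
Qed.
HB.instance Definition _ := GRing.isMonoidMorphism.Build K U emb emb_is_monoid.

Lemma umulE (u v : U) : u * v = (u.1 * v.1, u.1 *: v.2 + v.1 *: u.2 + mul u.2 v.2).
Proof. by []. Qed.

Lemma iotaM x y : iota x * iota y = iota (mul x y).
Proof. by rewrite umulE /iota /= mul0r !scale0r !add0r. Qed.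

Lemma embM_snd c u : (emb c * u).2 = c *: u.2.
Proof. by rewrite umulE /= scaler0 amul0l !addr0. Qed.


Lemma foldl_mul a b s : foldl mul (mul a b) s = mul a (foldl mul b s).
Proof. by elim: s a b => //= c s IH a b; rewrite IH IH amulA. Qed.

Lemma prod_list_cons a s : s != [::] -> prod_list mul (a :: s) = mul a (prod_list mul s).
Proof. by case: s => // b s _ /=; rewrite foldl_mul. Qed.

Lemma big_iota s : \prod_(a <- s) iota a = if s is [::] then 1 else iota (prod_list mul s).
Proof.
elim: s => [|a s IH]; first by rewrite big_nil.
rewrite big_cons IH; case: s IH => [|b s] IH; first by rewrite mulr1.
by rewrite iotaM (prod_list_cons a).   
Qed.

Lemma mmap1_iota n (x : 'I_n -> X) (m : 'X_{1..n}) :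
  mmap1 (fun i => iota (x i)) m =
  \prod_(a <- flatten [seq nseq (m i) (x i) | i <- enum 'I_n]) iota a.
Proof.
rewrite big_flatten /= big_map big_enum /mmap1 /=.
by apply: eq_bigr => i _; rewrite big_nseq iter_mulr_1.
Qed.

Lemma mmap1_snd n (x : 'I_n -> X) (m : 'X_{1..n}) :
  (mmap1 (fun i => iota (x i)) m).2 = mono_eval mul m x.
Proof.
rewrite mmap1_iota big_iota /mono_eval.
by case: (flatten _).
Qed.

Lemma mmap1_fst n (x : 'I_n -> X) (m : 'X_{1..n}) :
  (mmap1 (fun i => iota (x i)) m).1 = (m == 0%MM)%:R.
Proof.
rewrite mmap1_iota big_iota.
case E: (flatten _) => [|a s] /=.
- suff -> : m = 0%MM by rewrite eqxx.
  apply/mnmP => i; rewrite mnm0E.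
  have : size (flatten [seq nseq (m i) (x i) | i <- enum 'I_n]) = 0%N by rewrite E.
  rewrite size_flatten /shape -map_comp sumnE big_map big_enum /=.
  move/eqP; rewrite sum_nat_eq0 => /forallP /(_ i) /=.
  by rewrite size_nseq => /eqP.
- case: eqP => // m0; move: E; rewrite m0.
  suff -> : flatten [seq nseq ((0%MM : 'X_{1..n}) i) (x i) | i <- enum 'I_n] = [::] by [].
  by elim: (enum 'I_n) => //= i s' IH; rewrite mnm0E.
Qed.

Definition ev n (x : 'I_n -> X) (P : {mpoly K[n]}) : U := mmap emb (fun i => iota (x i)) P.

Lemma snd_sum (I : Type) (r : seq I) (F : I -> U) : (\sum_(i <- r) F i).2 = \sum_(i <- r) (F i).2.
Proof. by elim: r => [|a r IH]; rewrite ?big_nil ?big_cons //= IH. Qed.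
Lemma fst_sum (I : Type) (r : seq I) (F : I -> U) : (\sum_(i <- r) F i).1 = \sum_(i <- r) (F i).1.
Proof. by elim: r => [|a r IH]; rewrite ?big_nil ?big_cons //= IH. Qed.

Lemma pevalE n (P : {mpoly K[n]}) x : peval mul P x = (ev x P).2.
Proof.
rewrite /ev /mmap snd_sum /peval; apply: eq_bigr => m _.
by rewrite embM_snd mmap1_snd.
Qed.

Lemma ev_fst n (P : {mpoly K[n]}) x : (ev x P).1 = P@_0%MM.
Proof.
rewrite /ev /mmap fst_sum.
transitivity ((\sum_(m <- msupp P) P@_m *: 'X_[m])@_0%MM); last by rewrite -mpolyE.
rewrite raddf_sum /=; apply: eq_bigr => m _.
by rewrite mmap1_fst mcoeffZ mcoeffX eq_sym.
Qed.

Lemma evE n (P : {mpoly K[n]}) x : ev x P = (P@_0%MM, peval mul P x).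
Proof. by rewrite pevalE -(ev_fst P x); case: (ev x P). Qed.

Lemma ev_comp n k (P : {mpoly K[n]}) (lq : n.-tuple {mpoly K[k]}) (w : 'I_k -> X) :
  ev w (P \mPo lq) = mmap emb (fun i => ev w (tnth lq i)) P.
Proof.
rewrite /ev comp_mpolyEX [in RHS](mpolyE P) !raddf_sum /=.
apply/eq_bigr => m _; rewrite !mmapZ; congr (_ * _).
rewrite comp_mpolyX rmorph_prod mmapX /mmap1.
by apply/eq_bigr=> i _; rewrite rmorphXn.
Qed.

Lemma peval_comp n k (P : {mpoly K[n]}) (lq : n.-tuple {mpoly K[k]}) (w : 'I_k -> X) :
  (forall i, (tnth lq i)@_0%MM = 0) ->
  peval mul (P \mPo lq) w = peval mul P (fun i => peval mul (tnth lq i) w).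
Proof.
move=> h0; rewrite !pevalE ev_comp.
have -> : (fun i => ev w (tnth lq i)) = (fun i => iota (peval mul (tnth lq i) w)).
  by apply: funext => i; rewrite evE h0.
by [].
Qed.

Lemma ev_rename n k (P : {mpoly K[n]}) (s : 'I_n -> 'I_k) (w : 'I_k -> X) :
  ev w (P \mPo [tuple 'X_(s i) | i < n]) = ev (fun i => w (s i)) P.
Proof.
rewrite ev_comp /ev.
have -> : (fun i => mmap emb (fun j => iota (w j)) (tnth [tuple 'X_(s i) | i < n] i))
   = (fun i => iota (w (s i))).
  by apply: funext => i; rewrite tnth_map tnth_ord_tuple mmapX mmap1U.
by [].
Qed.

Lemma peval_rename n k (P : {mpoly K[n]}) (s : 'I_n -> 'I_k) (w : 'I_k -> X) :
  peval mul (P \mPo [tuple 'X_(s i) | i < n]) w = peval mul P (fun i => w (s i)).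
Proof. by rewrite !pevalE ev_rename. Qed.

Lemma pevalD n (P Q : {mpoly K[n]}) x : peval mul (P + Q) x = peval mul P x + peval mul Q x.
Proof. by rewrite !pevalE /ev raddfD. Qed.
Lemma pevalB n (P Q : {mpoly K[n]}) x : peval mul (P - Q) x = peval mul P x - peval mul Q x.
Proof. by rewrite !pevalE /ev raddfB. Qed.
Lemma pevalZ n (P : {mpoly K[n]}) c x : peval mul (c *: P) x = c *: peval mul P x.
Proof. by rewrite !pevalE /ev mmapZ embM_snd. Qed.
Lemma pevalC n c (x : 'I_n -> X) : peval mul (c%:MP) x = 0.
Proof. by rewrite !pevalE /ev mmapC. Qed.
Lemma peval0 n (x : 'I_n -> X) : peval mul 0 x = 0.
Proof. by rewrite -(mpolyC0) pevalC. Qed.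
Lemma pevalXU n (x : 'I_n -> X) i : peval mul 'X_i x = x i.
Proof. by rewrite !pevalE /ev mmapX mmap1U. Qed.
Lemma pevalM n (P Q : {mpoly K[n]}) x : P@_0%MM = 0 -> Q@_0%MM = 0 ->
  peval mul (P * Q) x = mul (peval mul P x) (peval mul Q x).
Proof.
move=> hP hQ; rewrite !pevalE /ev rmorphM /= -/(ev x P) -/(ev x Q) !evE hP hQ /=.
by rewrite !scale0r !add0r.
Qed.
Lemma peval_nc n (P : {mpoly K[n]}) x : peval mul (P - (P@_0%MM)%:MP) x = peval mul P x.
Proof. by rewrite pevalB pevalC subr0. Qed.


Lemma prod_list_in (A : set X) s : subalg_closed mul A -> (forall a, a \in s -> A a) ->
  A (prod_list mul s).
Proof.
case=> A0 AD AZ AM; case: s => [|a s] //= hs.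
have : A a by apply: hs; rewrite inE eqxx.
elim: s a hs => [|b s IH] a hs Aa //=.
apply: IH; last by apply: AM => //; apply: hs; rewrite !inE eqxx orbT.
move=> c; rewrite inE => /orP [/eqP ->|cs]; first by apply: AM => //; apply: hs; rewrite !inE eqxx orbT.
by apply: hs; rewrite !inE cs !orbT.
Qed.

Lemma peval_in (A : set X) n (P : {mpoly K[n]}) z : subalg_closed mul A ->
  (forall i, A (z i)) -> A (peval mul P z).
Proof.
move=> hA hz; have [A0 AD AZ AM] := hA.
rewrite /peval; apply: (big_ind A) => // m _.
apply: AZ; apply: prod_list_in => // a /flattenP [s /mapP [i _ ->]].
by move/nseqP => [-> _].
Qed.

Lemma gen_closed S : subalg_closed mul (gen_subalg mul S).
Proof.
split.
- by move=> A _ [].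
- by move=> x y hx hy A SA hA; have [_ h _ _] := hA; apply: h; [apply: hx|apply: hy].
- by move=> a x hx A SA hA; have [_ _ h _] := hA; apply: h; apply: hx.
- by move=> x y hx hy A SA hA; have [_ _ _ h] := hA; apply: h; [apply: hx|apply: hy].
Qed.

Lemma gen_sub S : S `<=` gen_subalg mul S.
Proof. by move=> x Sx A SA _; apply: SA. Qed.

Lemma gen_min S A : S `<=` A -> subalg_closed mul A -> gen_subalg mul S `<=` A.
Proof. by move=> SA hA x; apply. Qed.

Definition cat_fun n n' (z : 'I_n -> X) (z' : 'I_n' -> X) (i : 'I_(n + n')) : X :=
  match fintype.split i with inl a => z a | inr b => z' b end.

Lemma cat_funl n n' (z : 'I_n -> X) (z' : 'I_n' -> X) i : cat_fun z z' (lshift n' i) = z i.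
Proof. by rewrite /cat_fun (unsplitK (inl i : 'I_n + 'I_n')). Qed.
Lemma cat_funr n n' (z : 'I_n -> X) (z' : 'I_n' -> X) i : cat_fun z z' (rshift n i) = z' i.
Proof. by rewrite /cat_fun (unsplitK (inr i : 'I_n + 'I_n')). Qed.

Definition renl n n' (P : {mpoly K[n]}) : {mpoly K[n + n']} := P \mPo [tuple 'X_(lshift n' i) | i < n].
Definition renr n n' (P : {mpoly K[n']}) : {mpoly K[n + n']} := P \mPo [tuple 'X_(rshift n i) | i < n'].

Lemma peval_renl n n' (P : {mpoly K[n]}) z (z' : 'I_n' -> X) :
  peval mul (renl n' P) (cat_fun z z') = peval mul P z.
Proof. by rewrite peval_rename; congr peval; apply: funext => i; rewrite cat_funl. Qed.
Lemma peval_renr n n' (P : {mpoly K[n']}) (z : 'I_n -> X) z' :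
  peval mul (renr n P) (cat_fun z z') = peval mul P z'.
Proof. by rewrite peval_rename; congr peval; apply: funext => i; rewrite cat_funr. Qed.

Definition is_peval (S : set X) (x : X) :=
  exists n (P : {mpoly K[n]}) (z : 'I_n -> X), (forall i, S (z i)) /\ x = peval mul P z.

Lemma cat_funS (S : set X) n n' (z : 'I_n -> X) (z' : 'I_n' -> X) :
  (forall i, S (z i)) -> (forall i, S (z' i)) -> forall i, S (cat_fun z z' i).
Proof. by move=> h h' i; rewrite /cat_fun; case: fintype.split. Qed.

Lemma nc0 n (P : {mpoly K[n]}) : (P - (P@_0%MM)%:MP)@_0%MM = 0.
Proof. by rewrite mcoeffB mcoeffC eqxx mulr1 subrr. Qed.

Lemma is_peval_closed S : subalg_closed mul (is_peval S).
Proof.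
split.
- by exists 0%N, 0, (fun i => 0); split => [[]//|]; rewrite peval0.
- move=> x y [n [P [z [hz ->]]]] [n' [Q [z' [hz' ->]]]].
  exists (n + n')%N, (renl n' P + renr n Q), (cat_fun z z'); split; first exact: cat_funS.
  by rewrite pevalD peval_renl peval_renr.
- move=> a x [n [P [z [hz ->]]]]; exists n, (a *: P), z; split => //.
  by rewrite pevalZ.
- move=> x y [n [P [z [hz ->]]]] [n' [Q [z' [hz' ->]]]].
  exists (n + n')%N, ((renl n' P - ((renl n' P)@_0%MM)%:MP) * (renr n Q - ((renr n Q)@_0%MM)%:MP)), (cat_fun z z'); split; first exact: cat_funS.
  by rewrite pevalM ?nc0 // !peval_nc peval_renl peval_renr.
Qed.

Lemma gen_peval S x : gen_subalg mul S x -> is_peval S x.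
Proof.
apply: gen_min; last exact: is_peval_closed.
move=> y Sy; exists 1%N, 'X_ord0, (fun _ => y); split => //.
by rewrite pevalXU.
Qed.

Lemma foldl_mul0 s : (forall a, a \in s -> a = 0) -> foldl mul 0 s = 0.
Proof.
elim: s => //= a s IH h; rewrite amul0l IH // => b bs; apply: h.
by rewrite inE bs orbT.
Qed.

Lemma peval_zero n (P : {mpoly K[n]}) : peval mul P (fun _ => 0) = 0.
Proof.
rewrite /peval big1 // => m _; rewrite /mono_eval.
set s := flatten _.
have hs : forall a, a \in s -> a = 0.
  by move=> a /flattenP [r /mapP [i _ ->]] /nseqP [].
case: s hs => [|a s] hs /=; first by rewrite scaler0.
rewrite (hs a) ?inE ?eqxx // foldl_mul0 ?scaler0 // => b bs; apply: hs.
by rewrite inE bs orbT.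
Qed.
End Unit.

Section Core.
Variable (K : fieldType).

Lemma msizeM_le' k (p q : {mpoly K[k]}) : (msize (p * q) <= (msize p + msize q).-1)%N.
Proof.
have [->|p0] := eqVneq p 0; first by rewrite mul0r msize0.
have [->|q0] := eqVneq q 0; first by rewrite mulr0 msize0.
by rewrite msizeM.
Qed.

Lemma msizeDle k (p q : {mpoly K[k]}) d : (msize p <= d)%N -> (msize q <= d)%N -> (msize (p + q) <= d)%N.
Proof. by move=> hp hq; apply: leq_trans (msizeD_le _ _) _; rewrite geq_max hp hq. Qed.

Definition good k (a : {mpoly K[k]}) (c : K) (M : 'X_{1..k}) (d : nat) :=
  (msize (a - c *: 'X_[M]) <= d)%N /\ mdeg M = d.

Lemma msizeCX k (c : K) (M : 'X_{1..k}) : (msize (c *: 'X_[M]) <= (mdeg M).+1)%N.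
Proof. by apply: leq_trans (msizeZ_le _ _) _; rewrite msizeX. Qed.

Lemma good_mul k a b c c' (M M' : 'X_{1..k}) d e :
  good a c M d -> good b c' M' e -> good (a * b) (c * c') (M + M')%MM (d + e).
Proof.
move=> [ha hM] [hb hM']; split; last by rewrite mdegD hM hM'.
have -> : a * b - (c * c') *: 'X_[M + M'] =
  (a - c *: 'X_[M]) * b + (c *: 'X_[M]) * (b - c' *: 'X_[M']).
  rewrite mpolyXD mulrBl mulrBr addrA subrK.
  by rewrite -scalerAl -scalerAr scalerA.
have hbs : (msize b <= e.+1)%N.
  rewrite -(subrK (c' *: 'X_[M']) b); apply: msizeDle; first by apply: leq_trans hb _.
  by rewrite -hM'; apply: msizeCX.
apply: msizeDle.
- apply: leq_trans (msizeM_le' _ _) _.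
  have := leq_add ha hbs; rewrite addnS /= => h.
  by case: (msize _ + msize _)%N h => //= t; rewrite ltnS.
- apply: leq_trans (msizeM_le' _ _) _.
  have := leq_add (msizeCX c M) hb; rewrite hM /= addSn => h.
  by case: (msize _ + msize _)%N h => //= t; rewrite ltnS.
Qed.

Lemma good1 k : good (1 : {mpoly K[k]}) 1 0%MM 0.
Proof. by split; rewrite ?mdeg0 // mpolyX0 scale1r subrr msize0. Qed.

Lemma good_exp k a c (M : 'X_{1..k}) d e : good a c M d -> good (a ^+ e) (c ^+ e) (M *+ e)%MM (d * e).
Proof.
move=> h; elim: e => [|e IH]; first by rewrite !expr0 muln0 mulm0n; exact: good1.
rewrite !exprS mulmS mulnS; exact: good_mul.
Qed.

Lemma seq_argmax (T : eqType) (s : seq T) (f : T -> nat) : s != [::] ->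
  exists2 x, x \in s & forall y, y \in s -> (f y <= f x)%N.
Proof.
elim: s => // a s IH _; case: (eqVneq s [::]) => [->|/IH [x xs hx]].
  by exists a; rewrite ?inE // => y; rewrite inE => /eqP ->.
have [le|lt] := leqP (f a) (f x).
  exists x; first by rewrite inE xs orbT.
  by move=> y; rewrite inE => /orP [/eqP ->|]; [|apply: hx].
exists a; first by rewrite inE eqxx.
move=> y; rewrite inE => /orP [/eqP ->//|/hx h]; exact: leq_trans h (ltnW lt).
Qed.

Section Comp.
Variables (k n : nat) (Q : 'I_n -> {mpoly K[k]}) (c : 'I_n -> K) (j : 'I_n -> 'I_k) (N : 'I_n -> nat).
Hypothesis (jinj : injective j) (c0 : forall i, c i != 0) (N0 : forall i, (0 < N i)%N)
  (QN : forall i, (msize (Q i) <= N i)%N).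

Let R i := Q i + c i *: 'X_[U_(j i) *+ N i].

Lemma good_R i : good (R i) (c i) (U_(j i) *+ N i)%MM (N i).
Proof.
split; last by rewrite mdegMn mdeg1 mul1n.
by rewrite /R addrK.
Qed.

Lemma good_prod (r : seq 'I_n) (m : 'X_{1..n}) :
  good (\prod_(i <- r) R i ^+ m i) (\prod_(i <- r) c i ^+ m i)
    (\sum_(i <- r) (U_(j i) *+ N i) *+ m i)%MM (\sum_(i <- r) N i * m i)%N.
Proof.
elim: r => [|i r IH]; first by rewrite !big_nil; exact: good1.
rewrite !big_cons; apply: good_mul => //; apply: good_exp; exact: good_R.
Qed.

Definition mu (m : 'X_{1..n}) : 'X_{1..k} := (\sum_(i < n) (U_(j i) *+ N i) *+ m i)%MM.
Definition wt (m : 'X_{1..n}) : nat := (\sum_(i < n) N i * m i)%N.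

Lemma mu_at m i0 : mu m (j i0) = (N i0 * m i0)%N.
Proof.
rewrite /mu mnm_sumE (bigD1 i0) //= big1 ?addn0.
  by rewrite !mulmnE mnm1E eqxx mul1n.
move=> i ne; rewrite !mulmnE mnm1E (inj_eq jinj).
by rewrite (negbTE ne).
Qed.

Lemma mu_inj : injective mu.
Proof.
move=> m m' h; apply/mnmP => i.
have := mu_at m i; rewrite h mu_at => /eqP; rewrite eqn_pmul2l // => /eqP.
done.
Qed.

Lemma mdeg_mu m : mdeg (mu m) = wt m.
Proof. by have [_ ->] := good_prod (index_enum _) m. Qed.

Lemma coef_prod (m m0 : 'X_{1..n}) : (wt m <= wt m0)%N ->
  (\prod_(i < n) R i ^+ m i)@_(mu m0) = (\prod_(i < n) c i ^+ m i) * (mu m == mu m0)%:R.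
Proof.
move=> le; have [h _] := good_prod (index_enum _) m.
have : (msize (\prod_(i < n) R i ^+ m i - (\prod_(i < n) c i ^+ m i) *: 'X_[mu m]) <= mdeg (mu m0))%N.
  by rewrite mdeg_mu; apply: leq_trans h le.
move/msize_mdeg_ge; rewrite -mcoeff_eq0 mcoeffB mcoeffZ mcoeffX subr_eq0 => /eqP ->.
done.
Qed.

Lemma comp_nz (P : {mpoly K[n]}) : P@_0%MM = 0 -> P != 0 ->
  exists mu0, mu0 != 0%MM /\ (P \mPo [tuple R i | i < n])@_mu0 != 0.
Proof.
move=> P0 Pn0.
have hne : msupp P != [::] by rewrite msupp_eq0.
have [ms hms hmax] := seq_argmax wt hne.
exists (mu ms); split.
  rewrite -mdeg_eq0 mdeg_mu /wt; apply/negP => /eqP /eqP; rewrite sum_nat_eq0 => /forallP hz.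
  have : ms != 0%MM by apply: contraTneq hms => ->; rewrite -mcoeff_eq0 P0.
  apply/negP; rewrite negbK; apply/eqP/mnmP => i; rewrite mnm0E.
  by have := hz i; rewrite muln_eq0 (negbTE (lt0n_neq0 (N0 i))) /= => /eqP.
rewrite comp_mpolyE raddf_sum /=.
have tE m : \prod_(i < n) tnth [tuple R i0 | i0 < n] i ^+ m i = \prod_(i < n) R i ^+ m i.
  by apply: eq_bigr => i _; rewrite tnth_mktuple.
rewrite (bigD1_seq ms) //= ?msupp_uniq //.
rewrite [X in _ + X]big1 ?addr0.
  rewrite mcoeffZ tE coef_prod // eqxx mulr1 mulf_neq0 //; first by rewrite mcoeff_msupp in hms.
  by rewrite prodf_seq_neq0; apply/allP => i _; rewrite expf_neq0.
move=> m ne.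
rewrite mcoeffZ tE.
case: (boolP (m \in msupp P)) => mP; last by move: mP; rewrite -mcoeff_eq0 => /eqP ->; rewrite mul0r.
rewrite coef_prod ?hmax //.
by rewrite (inj_eq mu_inj) (negbTE ne) mulr0 mulr0.
Qed.

End Comp.
End Core.

Lemma msize_rename (K : fieldType) n k (Q : {mpoly K[n]}) (s : 'I_n -> 'I_k) :
  (msize (Q \mPo [tuple 'X_(s i) | i < n]) <= msize Q)%N.
Proof.
rewrite comp_mpolyE big_seq; apply: (big_ind (fun p => msize p <= msize Q)%N) => //.
- by rewrite msize0.
- by move=> p q hp hq; apply: msizeDle.
move=> m mQ; apply: leq_trans (msizeZ_le _ _) _.
have -> : \prod_(i < n) tnth [tuple 'X_(s i0) | i0 < n] i ^+ m i
   = 'X_[\sum_(i < n) (U_(s i) *+ m i)%MM] :> {mpoly K[k]}.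
  rewrite (big_morph (fun m => 'X_[m] : {mpoly K[k]}) (@mpolyXD _ _) (@mpolyX0 _ _)).
  apply: eq_bigr => i _.
  by rewrite tnth_mktuple mpolyXn.
rewrite msizeX; apply: leq_trans _ (msize_mdeg_lt mQ); rewrite ltnS.
rewrite mdeg_sum mdegE; apply: leq_sum => i _.
by rewrite mdegMn mdeg1 mul1n.

Qed.

Lemma msize_nc (K : fieldType) n (Q : {mpoly K[n]}) : (msize (Q - (Q@_0%MM)%:MP) <= (msize Q).+1)%N.
Proof.
apply: msizeDle; first exact: leqW.
rewrite msizeN msizeC.
by case: (_ != 0).
Qed.

Lemma XN_rename (K : fieldType) k (j : 'I_k) N :
  ('X_ord0 ^+ N : {mpoly K[1]}) \mPo [tuple 'X_((fun _ => j) i) | i < 1] = 'X_[U_(j) *+ N].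
Proof.
by rewrite rmorphXn /= comp_mpolyXU -tnth_nth tnth_mktuple mpolyXn.
Qed.

Lemma dedup (T : eqType) (s : seq T) : s != [::] ->
  exists k (w : 'I_k -> T) (pos : T -> 'I_k),
    [/\ injective w, (forall t, w t \in s) & (forall x, x \in s -> w (pos x) = x)].
Proof.
case: s => // a s _; set us := undup (a :: s).
have k0 : (0 < size us)%N.
  have : a \in us by rewrite mem_undup inE eqxx.
  by case: us.
exists (size us), (fun t => nth a us t), (fun x => insubd (Ordinal k0) (index x us)).
split.
- move=> t t' /eqP; rewrite nth_uniq ?undup_uniq //; first by move/eqP/val_inj.
- by move=> t; rewrite -mem_undup mem_nth.
- move=> x xs; rewrite /insubd insubT /=; first by rewrite index_mem mem_undup.
  by move=> _; rewrite nth_index // mem_undup.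
Qed.

Lemma mpoly0_eq0 (K : fieldType) (P : {mpoly K[0]}) : P@_0%MM = 0 -> P = 0.
Proof.
move=> P0; apply/mpolyP => m; rewrite mcoeff0.
suff -> : m = 0%MM by [].
by apply/mnmP => -[].
Qed.

Unset Implicit Arguments.
Section Free.
Variables (K : numFieldType) (X : topologicalLmodType K) (mul : X -> X -> X).
Hypothesis HA : comm_top_algebra mul.
Variables (I : Type) (F : set X) (sfgF : SFG mul F).
Variables (nQ : I -> nat) (Q : forall p, {mpoly K[nQ p]}) (z : forall p, 'I_(nQ p) -> X)
  (hz : forall p i, F (z p i)) (f : I -> X) (finj : injective f) (hf : forall p, F (f p))
  (eps : I -> K) (eps0 : forall p, eps p != 0).

Definition Nn p := (msize (Q p)).+1.
Definition gg p := peval mul (Q p) (z p) +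
  eps p *: peval mul ('X_ord0 ^+ Nn p : {mpoly K[1]}) (fun _ => f p).

Lemma gg_free n (P : {mpoly K[n]}) (p : 'I_n -> I) : injective p -> P@_0%MM = 0 -> P != 0 ->
  peval mul P (fun i => gg (p i)) != 0.
Proof.
move=> pinj P0 Pn0.
have n0 : (0 < n)%N.
  case: n P p pinj P0 Pn0 => // P p _ P0; by rewrite (mpoly0_eq0 P0) eqxx.
set s := flatten [seq [seq z (p i) l | l <- enum 'I_(nQ (p i))] | i <- enum 'I_n] ++
  [seq f (p i) | i <- enum 'I_n].
have fs i : f (p i) \in s by rewrite mem_cat orbC map_f ?mem_enum.
have zs i l : z (p i) l \in s.
  rewrite mem_cat; apply/orP; left; apply/flattenP.
  exists [seq z (p i) l | l <- enum 'I_(nQ (p i))]; first by apply: map_f; rewrite mem_enum.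
  by rewrite map_f ?mem_enum.
have sne : s != [::] by apply/negP => /eqP sE; have := fs (Ordinal n0); rewrite sE.
have [k [w [pos [winj ws wpos]]]] := dedup sne.
have wF t : F (w t).
  have := ws t; rewrite mem_cat => /orP [/flattenP [r /mapP [i _ ->] /mapP [l _ ->]]|/mapP [i _ ->]].
  - exact: hz.
  - exact: hf.
pose Qr i := Q (p i) \mPo [tuple 'X_(pos (z (p i) l)) | l < nQ (p i)].
pose Qc i := Qr i - ((Qr i)@_0%MM)%:MP.
pose j i := pos (f (p i)).
have jinj : injective j.
  move=> i i' /(congr1 w); rewrite /j !wpos // => /finj /pinj; done.
have QcN i : (msize (Qc i) <= Nn (p i))%N.
  by apply: leq_trans (msize_nc _) _; rewrite ltnS; apply: msize_rename.
have N0 i : (0 < Nn (p i))%N by [].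
have c0 i : eps (p i) != 0 by apply: eps0.
have [mu0 [mu0n hmu]] := comp_nz jinj c0 N0 QcN P0 Pn0.
set T := P \mPo _ in hmu.
have evR i : peval mul (Qc i + eps (p i) *: 'X_[U_(j i) *+ Nn (p i)]) w = gg (p i).
  rewrite (pevalD HA) (peval_nc HA) (peval_rename HA) (pevalZ HA) -XN_rename (peval_rename HA).
  rewrite /gg.
  have -> : (fun l => w (pos (z (p i) l))) = z (p i) by apply: funext => l; rewrite wpos.
  by rewrite /j wpos.
have R0 i : (tnth [tuple Qc i0 + eps (p i0) *: 'X_[U_(j i0) *+ Nn (p i0)] | i0 < n] i)@_0%MM = 0.
  rewrite tnth_mktuple mcoeffD nc0 mcoeffZ mcoeffX add0r.
  case: eqP => [h|_]; last by rewrite mulr0.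
  by have := congr1 (fun m : 'X_{1..k} => m (j i)) h; rewrite /= mulmnE mnm1E eqxx mnm0E mul1n.
have -> : peval mul P (fun i => gg (p i)) = peval mul (T - (T@_0%MM)%:MP) w.
  rewrite (peval_nc HA) (peval_comp HA) //; congr peval; apply: funext => i.
  by rewrite tnth_mktuple evR.
apply: sfgF => //; first exact: nc0.
apply/eqP => /(congr1 (fun q => q@_mu0)); rewrite mcoeffB mcoeffC mcoeff0.
by rewrite (negbTE mu0n) mulr0 subr0; apply/eqP.
Qed.


Lemma gg_inj : injective gg.
Proof.
move=> p1 p2 E; apply: contrapT => ne.
pose o1 : 'I_2 := Ordinal (isT : (1 < 2)%N).
pose p (i : 'I_2) := if i == ord0 then p1 else p2.
have pinj : injective p.
  move=> i i'; rewrite /p.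
  case: eqP => [->|/eqP hi]; case: eqP => [->|/eqP hi'] // h; try by case: ne; rewrite ?h.
  apply: val_inj; move: hi hi'; case: i => [[|[|//]] ?]; case: i' => [[|[|//]] ?] //.
pose P : {mpoly K[2]} := 'X_ord0 - 'X_o1.
have P0 : P@_0%MM = 0 by rewrite mcoeffB !mcoeffX !mnm1_eq0 subrr.
have Pn0 : P != 0.
  apply/eqP => /(congr1 (fun q => q@_(U_(ord0))%MM)).
  rewrite mcoeffB !mcoeffXU mcoeff0 eqxx /=.
  by rewrite subr0 => /eqP; rewrite oner_eq0.
have := @gg_free _ P p pinj P0 Pn0.
by rewrite (pevalB HA) !(pevalXU HA) /p /= E subrr eqxx.
Qed.

Lemma SFG_range (G : set X) : G `<=` range gg -> SFG mul G.
Proof.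
move=> sub n P x P0 Pn0 xinj Gx.
have hp i : {p | gg p = x i}.
  by apply: cid; have [p _ <-] := sub _ (Gx i); exists p.
pose p i := proj1_sig (hp i).
have -> : x = fun i => gg (p i) by apply: funext => i; rewrite (proj2_sig (hp i)).
apply: gg_free => // i i' /(congr1 gg); rewrite !(proj2_sig (hp _)); exact: xinj.
Qed.

Lemma peval_n0 (P : {mpoly K[0]}) zz : peval mul P zz = 0.
Proof. by rewrite -(peval_nc HA) (mpoly0_eq0 (nc0 P)) (peval0 HA). Qed.

Lemma sep (G1 G2 : set X) : G1 `<=` range gg -> G2 `<=` range gg ->
  (forall x, G1 x -> ~ G2 x) ->
  forall x, gen_subalg mul G1 x -> gen_subalg mul G2 x -> x = 0.
Proof.
move=> s1 s2 d12 x /(gen_peval HA) [n [P [z1 [hz1 ->]]]] /(gen_peval HA) [n' [P' [z2 [hz2 x2]]]].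
case: n P z1 hz1 x2 => [|n] P z1 hz1 x2; first exact: peval_n0.
set s := [seq z1 i | i <- enum 'I_n.+1] ++ [seq z2 i | i <- enum 'I_n'].
have z1s i : z1 i \in s by rewrite mem_cat map_f ?mem_enum.
have z2s i : z2 i \in s by rewrite mem_cat orbC map_f ?mem_enum.
have sne : s != [::] by apply/negP => /eqP sE; have := z1s ord0; rewrite sE.
have [k [w [pos [winj ws wpos]]]] := dedup sne.
have wr t : range gg (w t).
  have := ws t; rewrite mem_cat => /orP [/mapP [i _ ->]|/mapP [i _ ->]].
  - exact: s1.
  - exact: s2.
have hp t : {p | gg p = w t} by apply: cid; have [p _ <-] := wr t; exists p.
pose pp t := proj1_sig (hp t).
have ppinj : injective pp.
  by move=> t t' /(congr1 gg); rewrite !(proj2_sig (hp _)); exact: winj.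
pose D := (P \mPo [tuple 'X_(pos (z1 i)) | i < n.+1]) - (P' \mPo [tuple 'X_(pos (z2 i)) | i < n']).
have e1 (v : 'I_k -> X) : peval mul (P \mPo [tuple 'X_(pos (z1 i)) | i < n.+1]) v =
   peval mul P (fun i => v (pos (z1 i))) by rewrite (peval_rename HA).
have e2 (v : 'I_k -> X) : peval mul (P' \mPo [tuple 'X_(pos (z2 i)) | i < n']) v =
   peval mul P' (fun i => v (pos (z2 i))) by rewrite (peval_rename HA).
have Dw : peval mul D w = 0.
  rewrite (pevalB HA) e1 e2.
  have -> : (fun i => w (pos (z1 i))) = z1 by apply: funext => i; rewrite wpos.
  have -> : (fun i => w (pos (z2 i))) = z2 by apply: funext => i; rewrite wpos.
  by rewrite -x2 subrr.
have DC : D = (D@_0%MM)%:MP.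
  apply/eqP; rewrite -subr_eq0; apply/eqP; apply: contrapT => /eqP hne.
  have := @gg_free _ _ pp ppinj (nc0 D) hne.
  have -> : (fun i => gg (pp i)) = w by apply: funext => t; rewrite (proj2_sig (hp t)).
  by rewrite (peval_nc HA) Dw eqxx.
pose v t := if `[< G1 (w t) >] then w t else 0.
have : peval mul D v = 0 by rewrite DC (pevalC HA).
rewrite (pevalB HA) e1 e2.
have -> : (fun i => v (pos (z1 i))) = z1.
  apply: funext => i; rewrite /v wpos //.
  by have -> : `[< G1 (z1 i) >] = true by apply/asboolP.
have -> : (fun i => v (pos (z2 i))) = (fun _ => 0).
  apply: funext => i; rewrite /v wpos //.
  case: asboolP => // h; exfalso; exact: d12 h (hz2 i).
by rewrite (peval_zero HA) subr0.
Qed.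

End Free.
Set Implicit Arguments.
Local Open Scope card_scope.

Section PZ.
Variables (T V : Type) (d : T -> V).
Implicit Types (p q : set T * (T -> V)) (C : set (set T * (T -> V))).

Definition ext p q := p.1 `<=` q.1 /\ forall x, p.1 x -> p.2 x = q.2 x.

Lemma ext_refl p : ext p p.
Proof. by split. Qed.

Lemma ext_trans p q r : ext p q -> ext q r -> ext p r.
Proof.
move=> [pq hpq] [qr hqr]; split; first exact: subset_trans qr.
by move=> x px; rewrite hpq // hqr //; apply: pq.
Qed.

Definition pchain C := forall p q, C p -> C q -> ext p q \/ ext q p.

Definition bigcupP C : set T * (T -> V) :=
  ([set x | exists2 p, C p & p.1 x],
   fun x => match pselect (exists p, C p /\ p.1 x) with
            | left h => (proj1_sig (cid h)).2 x
            | right _ => d x end).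

Lemma bigcupP_ext C p : pchain C -> C p -> ext p (bigcupP C).
Proof.
move=> ch Cp; split; first by move=> x px; exists p.
move=> x px /=; case: pselect => [h|]; last by case; exists p.
case: (cid h) => q [Cq qx] /=.
by case: (ch p q Cp Cq) => [[_ e]|[_ e]]; [apply: e|rewrite e].
Qed.

Lemma bigcupP_two C x y : pchain C -> (bigcupP C).1 x -> (bigcupP C).1 y ->
  exists2 p, C p & p.1 x /\ p.1 y.
Proof.
move=> ch [p Cp px] [q Cq qy].
case: (ch p q Cp Cq) => [[pq _]|[qp _]].
  by exists q => //; split => //; apply: pq.
by exists p => //; split => //; apply: qp.
Qed.

Lemma pf_zorn (Phi : set T * (T -> V) -> Prop) p0 : Phi p0 ->
  (forall C, C `<=` Phi -> (forall p, C p -> ext p0 p) -> C !=set0 -> pchain C ->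
     Phi (bigcupP C)) ->
  exists p, [/\ Phi p, ext p0 p & forall q, Phi q -> ext p q -> ext q p].
Proof.
move=> Phi0 hC.
pose W := {p | Phi p /\ ext p0 p}.
pose R (s t : W) := `[< ext (proj1_sig s) (proj1_sig t) >].
pose t0 : W := exist _ p0 (conj Phi0 (ext_refl p0)).
have [| | |t tmax] := @ZL_preorder W t0 R.
- by move=> s; apply/asboolP; apply: ext_refl.
- by move=> r s t /asboolP rs /asboolP st; apply/asboolP; exact: ext_trans rs st.
- move=> Aw tot.
  case: (pselect (Aw !=set0)) => [[s0 As0]|Aw0]; last first.
    by exists t0 => s As; exfalso; apply: Aw0; exists s.
  pose C := [set proj1_sig s | s in Aw].
  have CPhi : C `<=` Phi by move=> _ [s _ <-]; case: (proj2_sig s).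
  have C0 p : C p -> ext p0 p by move=> [s _ <-]; case: (proj2_sig s).
  have Cn : C !=set0 by exists (proj1_sig s0), s0.
  have ch : pchain C.
    move=> _ _ [s As <-] [s' As' <-].
    by case: (tot s s' As As') => /asboolP; [left|right].
  have hU : Phi (bigcupP C) /\ ext p0 (bigcupP C).
    split; first exact: hC.
    apply: ext_trans (C0 _ (ex_intro2 _ _ s0 As0 erefl)) _.
    by apply: bigcupP_ext => //; exists s0.
  exists (exist _ (bigcupP C) hU) => s As; apply/asboolP => /=.
  by apply: bigcupP_ext => //; exists s.
exists (proj1_sig t); split; [by case: (proj2_sig t)|by case: (proj2_sig t)|].
move=> q Phiq tq.
have hq : Phi q /\ ext p0 q by split => //; apply: ext_trans tq; case: (proj2_sig t).
have := tmax (exist _ q hq); rewrite /R /=.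
by move=> /(_ (asboolT tq)) /asboolP.
Qed.

End PZ.

Definition injon (T U : Type) (D : set T) (g : T -> U) :=
  forall x y, D x -> D y -> g x = g y -> x = y.

Lemma compare_sets (T : Type) (D E : set T) :
  (exists g : T -> T, injon D g /\ (forall x, D x -> E (g x))) \/
  (exists g : T -> T, injon E g /\ (forall x, E x -> D (g x))).
Proof.
pose Phi (p : set T * (T -> T)) :=
  [/\ p.1 `<=` D, injon p.1 p.2 & forall x, p.1 x -> E (p.2 x)].
have [|C CPhi _ _ ch|p [[SD ginj gE] _ pmax]] := @pf_zorn T T id Phi (set0, id).
- by split => // x [].
- split.
  + by move=> x [p Cp px]; have [h _ _] := CPhi p Cp; apply: h.
  + move=> x y Ux Uy; have [p Cp [px py]] := bigcupP_two ch Ux Uy.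
    have [_ e] := bigcupP_ext id ch Cp.
    rewrite -!e //; have [_ h _] := CPhi p Cp; exact: h.
  + move=> x Ux; have [p Cp px] := Ux.
    have [_ e] := bigcupP_ext id ch Cp.
    rewrite -e //; have [_ _ h] := CPhi p Cp; exact: h.
case: p SD ginj gE pmax => S g /= SD ginj gE pmax.
case: (pselect (D `<=` S)) => [DS|nDS].
  left; exists g; split; last by move=> x /DS; apply: gE.
  by move=> x y /DS Sx /DS Sy; apply: ginj.
case: (pselect (E `<=` g @` S)) => [ES|nES].
  right.
  pose h x := match pselect (exists s, S s /\ g s = x) with
              | left hx => proj1_sig (cid hx) | right _ => x end.
  have hP x : E x -> S (h x) /\ g (h x) = x.
    move=> Ex; rewrite /h; case: pselect => [hx|]; first by case: (cid hx).
    by case; have [s Ss <-] := ES x Ex; exists s.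
  exists h; split; last by move=> x /hP [/SD].
  move=> x y Ex Ey hxy.
  by rewrite -(hP x Ex).2 -(hP y Ey).2 hxy.
have /existsNP [d0 /not_implyP [Dd0 nSd0]] := nDS.
have /existsNP [e0 /not_implyP [Ee0 ne0]] := nES.
pose q := (S `|` [set d0], fun x => match pselect (x = d0) with left _ => e0 | right _ => g x end).
have Phiq : Phi q.
  split => /=.
  - by move=> x [/SD|->].
  - move=> x y hx hy; case: pselect => [->|nx]; case: pselect => [->|ny] //.
    + have Sy : S y by case: hy => // /ny.
      by move=> e; exfalso; apply: ne0; exists y.
    + have Sx : S x by case: hx => // /nx.
      by move=> e; exfalso; apply: ne0; exists x.
    + have Sx : S x by case: hx => // /nx.
      have Sy : S y by case: hy => // /ny.
      exact: ginj.
  - move=> x hx; case: pselect => // nx; apply: gE.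
    by case: hx => // /nx.
have extpq : ext (S, g) q.
  split => /=; first by move=> x Sx; left.
  by move=> x Sx; case: pselect => // xd; rewrite xd in Sx.
have [qS _] := pmax q Phiq extpq.
by exfalso; apply: nSd0; apply: qS; right.
Qed.

Lemma inj_of_card (T U : Type) (B : set U) : [set: T] #<= B ->
  exists f : T -> U, injective f /\ (forall t, B (f t)).
Proof.
move/card_leP => [g].
exists (fun t => \val (g (SigSub (mem_set (I : [set: T] t))))); split.
- move=> t t' /val_inj /(@inj _ _ _ g).
  by move=> /(_ (mem_set I) (mem_set I)) /(congr1 val).
- by move=> t; apply: set_mem; apply: valP.
Qed.

Section Sq.
Variable A : Type.
Definition sq (D : set A) : set (A * A) := [set u | D u.1 /\ D u.2].
Definition dom (S : set (A * A)) : set A := [set a | S (a, a)].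

Lemma dom_sq D : dom (sq D) = D.
Proof. by apply/seteqP; split => a /=; [case|split]. Qed.

Lemma card_sq : infinite_set [set: A] -> exists phi : A * A -> A, injective phi.
Proof.
move=> /infiniteP hA; have [e0 [e0inj _]] := inj_of_card hA.
pose D0 := range e0.
pose einv a := match pselect (exists n, e0 n = a) with
               | left h => proj1_sig (cid h) | right _ => 0%N end.
have einvE a : D0 a -> e0 (einv a) = a.
  move=> [n _ <-]; rewrite /einv; case: pselect => [h|]; last by case; exists n.
  by case: (cid h).
pose f0 (u : A * A) := e0 (pickle (einv u.1, einv u.2)).
pose Phi (p : set (A * A) * (A * A -> A)) :=
  [/\ p.1 = sq (dom p.1), injon p.1 p.2 & forall u, p.1 u -> dom p.1 (p.2 u)].
have [|C CPhi C0 _ ch|[S f] [[SE finj fD] [S0 _] pmax]] :=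
    @pf_zorn (A * A) A (fun u => u.1) Phi (sq D0, f0).
- split => /=; first by rewrite dom_sq.
  + move=> u u' [hu1 hu2] [hu1' hu2'] /e0inj /(pcan_inj (@pickleK _)) [h1 h2].
    move: u u' hu1 hu2 hu1' hu2' h1 h2 => [a b] [a' b'] /= ha hb ha' hb' h1 h2.
    by rewrite -(einvE _ ha) -(einvE _ hb) h1 h2 !einvE.
  + by move=> u _; rewrite dom_sq; exists (pickle (einv u.1, einv u.2)).
- have Uext p : C p -> ext p (bigcupP (fun u => u.1) C) by move=> Cp; apply: bigcupP_ext.
  split.
  + apply/seteqP; split.
    * move=> u [p Cp pu]; have [pE _ _] := CPhi p Cp.
      have : sq (dom p.1) u by rewrite -pE.
      by case=> h1 h2; split; exists p.
    * move=> u [h1 h2]; have [p Cp [p1 p2]] := bigcupP_two (d := fst) ch h1 h2.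
      have [pE _ _] := CPhi p Cp.
      exists p => //; rewrite pE; split.
      - by move: p1; rewrite pE => -[].
      - by move: p2; rewrite pE => -[].
  + move=> u u' Uu Uu'; have [p Cp [pu pu']] := bigcupP_two (d := fst) ch Uu Uu'.
    have [_ e] := Uext p Cp; rewrite -!e //.
    by have [_ h _] := CPhi p Cp; apply: h.
  + move=> u [p Cp pu]; have [_ e] := Uext p Cp; rewrite -e //.
    have [_ _ h] := CPhi p Cp; exists p => //; exact: h.
move: S0 finj fD pmax SE => /= S0 finj fD pmax SE.
set D := dom S in fD SE.
have Sq u : S u <-> sq D u by rewrite {1}SE.
have D0D : D0 `<=` D by move=> a Da; apply: S0; split.
have a0D : D (e0 0%N) by apply: D0D; exists 0%N.
have a1D : D (e0 1%N) by apply: D0D; exists 1%N.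
have a01 : e0 0%N <> e0 1%N by move/e0inj.
case: (compare_sets D (~` D)) => [[g [ginj gE]]|[h [hinj hD]]].
- exfalso.
  pose ginv x := match pselect (exists a, D a /\ g a = x) with
                 | left hx => proj1_sig (cid hx) | right _ => x end.
  have ginvP x : (exists a, D a /\ g a = x) -> D (ginv x) /\ g (ginv x) = x.
    by move=> hx; rewrite /ginv; case: pselect => // hx'; case: (cid hx').
  pose Ds := D `|` [set x | exists a, D a /\ g a = x].
  pose kap x := match pselect (D x) with
                | left _ => f (x, e0 0%N) | right _ => f (ginv x, e0 1%N) end.
  have Dsn x : Ds x -> ~ D x -> exists a, D a /\ g a = x by case.
  have kapD x : Ds x -> D (kap x).
    move=> hx; rewrite /kap; case: pselect => Dx; apply: fD; apply/Sq; split => //=.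
    by have [] := ginvP x (Dsn x hx Dx).
  have Sxy a b : D a -> D b -> S (a, b) by move=> ha hb; apply/Sq; split.
  have kapinj : injon Ds kap.
    move=> x y hx hy; rewrite /kap; case: pselect => Dx; case: pselect => Dy.
    + by move/finj => /(_ (Sxy _ _ Dx a0D) (Sxy _ _ Dy a0D)) [].
    + have [gD _] := ginvP y (Dsn y hy Dy).
      by move/finj => /(_ (Sxy _ _ Dx a0D) (Sxy _ _ gD a1D)) [_ /a01].
    + have [gD _] := ginvP x (Dsn x hx Dx).
      by move/finj => /(_ (Sxy _ _ gD a1D) (Sxy _ _ Dy a0D)) [_ /esym /a01].
    + have [gDx gx] := ginvP x (Dsn x hx Dx).
      have [gDy gy] := ginvP y (Dsn y hy Dy).
      move/finj => /(_ (Sxy _ _ gDx a1D) (Sxy _ _ gDy a1D)) [e].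
      by rewrite -gx -gy e.
  pose th (u : A * A) := f (kap u.1, kap u.2).
  have thS u : sq Ds u -> S (kap u.1, kap u.2).
    by case=> h1 h2; apply/Sq; split; apply: kapD.
  have thD u : sq Ds u -> D (th u) by move=> hu; apply: fD; apply: thS.
  have thinj : injon (sq Ds) th.
    move=> u u' hu hu' /finj => /(_ (thS u hu) (thS u' hu')) [e1 e2].
    case: hu hu' => [h1 h2] [h1' h2'].
    move: u u' h1 h2 h1' h2' e1 e2 => [a b] [a' b'] /= h1 h2 h1' h2' e1 e2.
    by rewrite (kapinj _ _ h1 h1' e1) (kapinj _ _ h2 h2' e2).
  pose fs u := match pselect (S u) with left _ => f u | right _ => g (th u) end.
  pose q := (sq Ds, fs).
  have SDs u : S u -> sq Ds u by move/Sq => [h1 h2]; split; left.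
  have Phiq : Phi q.
    split => /=; first by rewrite dom_sq.
    + move=> u u' hu hu'; rewrite /fs; case: pselect => Su; case: pselect => Su'.
      * exact: finj.
      * by move=> e; exfalso; apply: (gE _ (thD u' hu')); rewrite -e; apply: fD.
      * by move=> e; exfalso; apply: (gE _ (thD u hu)); rewrite e; apply: fD.
      * by move/(ginj _ _ (thD u hu) (thD u' hu')); apply: thinj.
    + move=> u hu; rewrite dom_sq /fs; case: pselect => Su; first by left; apply: fD.
      by right; exists (th u); split => //; apply: thD.
  have extpq : ext (S, f) q.
    split => /=; first exact: SDs.
    by move=> u Su; rewrite /fs; case: pselect.
  have [qS _] := pmax q Phiq extpq.
  have : S (g (e0 0%N), g (e0 0%N)).
    by apply: qS; split; right; exists (e0 0%N).
  by move/Sq => [h _]; apply: (gE _ a0D).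
- pose psi a := match pselect (D a) with left _ => (a, e0 0%N) | right _ => (h a, e0 1%N) end.
  have psiS a : S (psi a).
    by apply/Sq; rewrite /psi; case: pselect => [Da|nDa]; split => //; apply: hD.
  have psiinj : injective psi.
    move=> a b; rewrite /psi; case: pselect => Da; case: pselect => Db //.
    + by case.
    + by case=> _ /a01.
    + by case=> _ /esym /a01.
    + by case=> /(hinj _ _ Da Db).
  pose chi a := f (psi a).
  have chiD a : D (chi a) by apply: fD.
  have chiinj : injective chi by move=> a b /finj => /(_ (psiS a) (psiS b)) /psiinj.
  exists (fun u => f (chi u.1, chi u.2)).
  have cS a b : S (chi a, chi b) by apply/Sq; split; apply: chiD.
  move=> [a b] [a' b'] /finj /= => /(_ (cS a b) (cS a' b')).
  by case=> /chiinj -> /chiinj ->.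
Qed.
End Sq.

Lemma dense_step (K : numFieldType) (X : topologicalLmodType K) (O : set X) (y h : X) :
  open O -> O y -> exists2 e : K, e != 0 & O (y + e *: h).
Proof.
move=> oO Oy.
have c1 : (fun t : K^o => t *: h) @ (nbhs (0:K^o)) --> 0 *: h.
  exact: (@continuous2_cvg K^o K^o X X (nbhs (0:K^o)) _ (fun t => t) (fun _ => h)
    (fun a b => a *: b) 0 h (@scale_continuous K X (0, h)) cvg_id (cvg_cst _)).
have c2 : (fun t : K^o => y + t *: h) @ (nbhs (0:K^o)) --> y + 0 *: h.
  exact: (@continuous2_cvg K^o X X X (nbhs (0:K^o)) _ (fun _ => y) (fun t => t *: h)
    (fun a b => a + b) y (0 *: h) (@add_continuous X (y, 0 *: h)) (cvg_cst _) c1).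
rewrite scale0r addr0 in c2.
have /c2 : nbhs y O by apply: open_nbhs_nbhs.
move=> /nbhs_ballP [e /= e0 he].
exists (e / 2); first by rewrite mulf_neq0 ?gt_eqF // invr_eq0 pnatr_eq0.
apply: (he (e / 2)).
rewrite /ball /= sub0r normrN gtr0_norm ?divr_gt0 //.
by rewrite ltr_pdivrMr // ltr_pMr // ltr1n.
Qed.

Lemma weight_index (K : numFieldType) (X : topologicalLmodType K) (A : Type) :
  weight_le X A -> exists O : A -> set X,
    (forall b, open (O b) /\ O b !=set0) /\
    (forall V, open V -> V !=set0 -> exists b, O b `<=` V).
Proof.
move=> [B [Bo Bx] /pcard_surjP [g gs]].
pose O b := if `[< open (g b) /\ g b !=set0 >] then g b else setT.
exists O; split.
  move=> b; rewrite /O; case: asboolP => // _; split; [exact: openT|by exists 0].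
move=> V oV [x Vx].
have : filter_from [set U | B U /\ U x] id V by apply: Bx; exact: open_nbhs_nbhs.
move=> [U [BU Ux] UV].
have [b _ gb] := gs U BU.
exists b; rewrite /O; case: asboolP => [_|]; first by rewrite gb.
by case; split; rewrite gb //; [exact: Bo|exists x].
Qed.


Theorem main_gen (K : numFieldType) (X : topologicalLmodType K) (mul : X -> X -> X)
    (M : set X) (A : Type) :
  comm_top_algebra mul -> infinite_set [set: A] -> weight_le X A ->
  (inf_strongly_dense_algebrable mul A M <-> strongly_dense_algebrable mul A M).
Proof.
move=> HA hinf hw; split.
  move=> [Y [h1 h2 h3 _]].
  have [a _] := infinite_setN0 hinf.
  by exists (Y a).
move=> [Y0 [[F [sfgF cardF ->]] Yd YM]].
have [e [einj eF]] : exists e : A -> X, injective e /\ (forall a, F (e a)).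
  by apply: inj_of_card; move: cardF => /card_esym; rewrite card_eq_le => /andP [].
have [phi phiinj] := card_sq hinf.
have [OO [Oon Osub]] := weight_index hw.
have hy : forall b, exists y, gen_subalg mul F y /\ OO b y.
  move=> b; have [oO nO] := Oon b; have [y [Oy Fy]] := Yd (OO b) nO oO.
  by exists y.
have [y hy'] := choice hy.
have hrep : forall b, exists r : {n : nat & ({mpoly K[n]} * ('I_n -> X))%type},
   (forall i, F ((projT2 r).2 i)) /\ y b = peval mul (projT2 r).1 (projT2 r).2.
  move=> b; have [n [P [z [hz ->]]]] := gen_peval HA (hy' b).1.
  by exists (existT _ n (P, z)).
have [rep hrep'] := choice hrep.
pose I := (A * A)%type.
pose nQ (p : I) := projT1 (rep p.2).
pose Q (p : I) : {mpoly K[nQ p]} := (projT2 (rep p.2)).1.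
pose z (p : I) : 'I_(nQ p) -> X := (projT2 (rep p.2)).2.
pose f (p : I) := e (phi p).
have finj : injective f by move=> p q /einj /phiinj.
have hf p : F (f p) by apply: eF.
have hz p i : F (z p i) by apply: (hrep' p.2).1.
have heps : forall p : I, exists eps : K, eps != 0 /\
    OO p.2 (peval mul (Q p) (z p) + eps *: peval mul ('X_ord0 ^+ Nn K I nQ Q p : {mpoly K[1]}) (fun _ => f p)).
  move=> p; have [oO _] := Oon p.2.
  have Oy : OO p.2 (peval mul (Q p) (z p)).
    by rewrite /Q /z -(hrep' p.2).2; exact: (hy' p.2).2.
  have [eps e0 he] := dense_step (peval mul ('X_ord0 ^+ Nn K I nQ Q p : {mpoly K[1]}) (fun _ => f p)) oO Oy.
  by exists eps.
have [eps heps'] := choice heps.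
have eps0 p : eps p != 0 by case: (heps' p).
pose g := gg K X mul I nQ Q z f eps.
pose G (k : A) := [set g (k, b) | b in [set: A]].
have Grange k : G k `<=` range g by move=> _ [b _ <-]; exists (k, b).
have ginj : injective g := gg_inj K X mul HA I F sfgF nQ Q z hz f finj hf eps eps0.
have gF p : gen_subalg mul F (g p).
  have [_ AD AZ _] := gen_closed mul F.
  apply: AD; first by apply: peval_in => //; [exact: gen_closed|move=> i; apply: gen_sub; exact: hz].
  by apply: AZ; apply: peval_in => //; [exact: gen_closed|move=> i; apply: gen_sub; exact: hf].
rewrite /inf_strongly_dense_algebrable; exists (fun k => gen_subalg mul (G k)); split.
- move=> k; exists (G k); split => //.
  + exact: (SFG_range K X mul HA I F sfgF nQ Q z hz f finj hf eps eps0).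
  + apply: inj_card_eq => b b' _ _ /ginj [].
    done.
- move=> k V nV oV; have [b Ob] := Osub V oV nV.
  exists (g (k, b)); split; first by apply: Ob; exact: (heps' (k, b)).2.
  by apply: gen_sub; exists b.
- move=> k; apply: subset_trans YM; apply: gen_min; last exact: gen_closed.
  by move=> _ [b _ <-]; exact: gF.
- move=> k1 k2 nk; apply/seteqP; split => x.
  + move=> [h1 h2]; apply: (sep K X mul HA I F sfgF nQ Q z hz f finj hf eps eps0 _ _ (Grange k1) (Grange k2)) h1 h2.
    by move=> _ [b _ <-] [b' _ /ginj []] /esym.
  + move=> ->; have [h0 _ _ _] := gen_closed mul (G k1); have [h0' _ _ _] := gen_closed mul (G k2).
    by split.
Qed.

Theorem theorem4p6 (R : realType) (b : bool)
    (X : topologicalLmodType (Kfield R b)) (mul : X -> X -> X)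
    (M : set X) (A : Type) :
  comm_top_algebra mul ->
  infinite_set [set: A] ->
  weight_le X A ->
  (inf_strongly_dense_algebrable mul A M <-> strongly_dense_algebrable mul A M).
Proof. exact: main_gen. Qed.
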